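(* Let $h$ be the Hahn sequence space and let $\Delta:h\to h$ be the forward difference operator $(\Delta x)_k=x_k-x_{k+1}$. Then the continuous spectrum of $\Delta$ on $h$ is $$\sigma_c(\Delta,h)=\{\alpha\in\mathbb{C}:|1-\alpha|=1\}.$$
   Context: Sequences are indexed by $\mathbb{N}=\{0,1,2,\dots\}$. The Hahn sequence space is $h=\{x=(x_k):\sum_{k=1}^\infty k|x_k-x_{k+1}|<\infty \text{ and } \lim_{k\to\infty}x_k=0\}$, a Banach space with norm $\|x\|_h=\sum_k k|x_k-x_{k+1}|+\sup_k|x_k|$. $\Delta$ is given by the matrix with $1$ on the main diagonal and $-1$ on the first superdiagonal. For a bounded operator $T$ on a Banach space $X$, the continuous spectrum $\sigma_c(T,X)$ is the set of $\alpha\in\mathbb{C}$ such that $\alpha I-T$ is injective, its range is dense in $X$, and its inverse (defined on the range) is unbounded. *)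

(* Defs.v *)
From Stdlib Require Import Reals.
From Coquelicot Require Import Coquelicot.

Open Scope R_scope.

Definition seqC := nat -> C.

(** The term k |x_k - x_{k+1}| (the k = 0 term is 0, so summing over all
    k : nat is the same as summing from k = 1). *)
Definition hahn_var (x : seqC) (k : nat) : R :=
  INR k * Cmod (Cminus (x k) (x (S k))).

Definition in_hahn (x : seqC) : Prop :=
  ex_series (hahn_var x) /\ filterlim x eventually (locally (RtoC 0)).

Definition hahn_norm (x : seqC) : R :=
  Series (hahn_var x) + real (Sup_seq (fun k => Finite (Cmod (x k)))).

Definition fwd_diff (x : seqC) : seqC := fun k => Cminus (x k) (x (S k)).

Definition shift_op (alpha : C) (T : seqC -> seqC) (x : seqC) : seqC :=
  fun k => Cminus (Cmult alpha (x k)) (T x k).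

(** Continuous spectrum of an operator T on the normed sequence space
    X (membership predicate) with norm N: alpha I - T is injective on X,
    its range is dense in X, and its inverse (on the range) is unbounded. *)
Definition cont_spectrum (X : seqC -> Prop) (N : seqC -> R)
    (T : seqC -> seqC) (alpha : C) : Prop :=
  let S := shift_op alpha T in
  (forall x y, X x -> X y -> S x = S y -> x = y) /\
  (forall y, X y -> forall eps, 0 < eps ->
     exists x, X x /\ N (fun k => Cminus (S x k) (y k)) < eps) /\
  ~ (exists M : R, forall x, X x -> N x <= M * N (S x)).

(* Main.v *)
Require Import Defs.
From Stdlib Require Import Reals Lra Lia Psatz FunctionalExtensionality.
From Coquelicot Require Import Coquelicot.
Open Scope R_scope.

Definition sp (x : seqC) : R := real (Sup_seq (fun k => Finite (Cmod (x k)))).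

Lemma hahn_norm_eq x : hahn_norm x = Series (hahn_var x) + sp x.
Proof. reflexivity. Qed.

Lemma Sup_seq_cst (B : R) : Sup_seq (fun _ => Finite B) = Finite B.
Proof.
  apply is_sup_seq_unique. intros eps. split.
  - intros n. simpl. destruct eps; simpl; lra.
  - exists 0%nat. simpl. destruct eps; simpl; lra.
Qed.

Lemma sp_bound x B : (forall k, Cmod (x k) <= B) ->
  (forall k, Cmod (x k) <= sp x) /\ sp x <= B.
Proof.
  intros HB. unfold sp.
  assert (H1 : Rbar_le (Sup_seq (fun k => Finite (Cmod (x k)))) (Finite B)).
  { rewrite <- (Sup_seq_cst B). apply Sup_seq_le. intros n; simpl; auto. }
  assert (H2 : forall k, Rbar_le (Finite (Cmod (x k))) (Sup_seq (fun k => Finite (Cmod (x k))))).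
  { intros k. apply (is_sup_seq_major (fun k => Finite (Cmod (x k)))). apply Sup_seq_correct. }
  specialize (H2 0%nat) as H20.
  destruct (Sup_seq (fun k => Finite (Cmod (x k)))) as [r| |] eqn:E; simpl in *; try contradiction.
  all: split; auto; intros k; specialize (H2 k); simpl in H2; auto.
Qed.

Lemma sp_ge0 x B : (forall k, Cmod (x k) <= B) -> 0 <= sp x.
Proof. intros H. destruct (sp_bound x B H) as [H1 _]. specialize (H1 0%nat).
  pose proof (Cmod_ge_0 (x 0%nat)). lra. Qed.

Lemma hv_ge0 x k : 0 <= hahn_var x k.
Proof. unfold hahn_var. apply Rmult_le_pos. apply pos_INR. apply Cmod_ge_0. Qed.

Lemma Series_zero : Series (fun _ => 0) = 0.
Proof.
  transitivity (0 * Series (fun _ => 0)); [|ring].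
  rewrite <- Series_scal_l. apply Series_ext. intros; ring.
Qed.

Lemma Series_ge0 a : ex_series a -> (forall k, 0 <= a k) -> 0 <= Series a.
Proof.
  intros He H. rewrite <- Series_zero. apply Series_le; auto. intros; split; auto; lra.
Qed.

Lemma ex_series_zero : ex_series (fun _ : nat => 0).
Proof.
  eapply ex_series_ext; [| apply (ex_series_scal_r 0 _ (ex_series_geom (1/2) ltac:(rewrite Rabs_pos_eq; lra)))].
  intros; simpl; ring.
Qed.

Lemma partial_le_Series a m : ex_series a -> (forall k, 0 <= a k) ->
  sum_f_R0 a m <= Series a.
Proof.
  intros He H. rewrite (Series_incr_n a (S m)); [|lia|auto]. simpl.
  assert (0 <= Series (fun k => a (S (m + k)))).
  { apply Series_ge0; auto. apply (ex_series_incr_n a (S m)) in He. exact He. }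
  lra.
Qed.

Definition fsupp (x : seqC) (n : nat) := forall k, (n <= k)%nat -> x k = RtoC 0.

Lemma fs_series a n : (forall k, (n <= k)%nat -> a k = 0) ->
  ex_series a /\ Series a = sum_f_R0 a n.
Proof.
  intros H.
  assert (Ht : ex_series (fun k => a (S n + k)%nat)).
  { eapply ex_series_ext; [|apply ex_series_zero]. intros k; simpl; rewrite H; auto; lia. }
  assert (He : ex_series a) by (apply (ex_series_incr_n a (S n)); exact Ht).
  split; auto.
  rewrite (Series_incr_n a (S n)); [|lia|auto]. simpl.
  rewrite (Series_ext _ (fun _ => 0)). rewrite Series_zero. ring.
  intros k. apply H. lia.
Qed.

Lemma lim0_eps x : filterlim x eventually (locally (RtoC 0)) ->
  forall eps, 0 < eps -> exists N, forall n, (N <= n)%nat -> Cmod (x n) < eps.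
Proof.
  intros Hl eps Heps.
  set (nf := @norm_factor C_AbsRing C_NormedModule).
  assert (Hnf : 0 < nf) by apply norm_factor_gt_0.
  assert (He : 0 < eps / nf) by (apply Rdiv_lt_0_compat; [exact Heps| exact Hnf]).
  destruct (proj1 (filterlim_locally x (RtoC 0)) Hl (mkposreal _ He)) as [N HN].
  exists N. intros n Hn. specialize (HN n Hn).
  apply (@norm_compat2 C_AbsRing C_NormedModule) in HN. simpl in HN.
  fold nf in HN.
  assert (E : Cmod (x n) < nf * (eps / nf)).
  { eapply Rle_lt_trans; [|exact HN]. right. unfold norm, minus, plus, opp; simpl.
    f_equal. apply injective_projections; simpl; ring. }
  replace eps with (nf * (eps / nf)). exact E.
  field. apply Rgt_not_eq. exact Hnf.
Qed.

Lemma lim0_intro x : (forall eps, 0 < eps -> exists N, forall n, (N <= n)%nat -> Cmod (x n) < eps) ->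
  filterlim x eventually (locally (RtoC 0)).
Proof.
  intros H. apply filterlim_locally. intros eps.
  destruct (H eps (cond_pos eps)) as [N HN]. exists N. intros n Hn.
  apply (@norm_compat1 C_AbsRing C_NormedModule). change (Cmod (minus (x n) (RtoC 0)) < eps).
  replace (minus (x n) (RtoC 0)) with (x n) by (apply injective_projections; simpl; ring).
  auto.
Qed.

Lemma fs_hahn x n : fsupp x n -> in_hahn x /\
  Series (hahn_var x) = sum_f_R0 (hahn_var x) n.
Proof.
  intros H.
  assert (Hv : forall k, (n <= k)%nat -> hahn_var x k = 0).
  { intros k Hk. unfold hahn_var. rewrite (H k Hk), (H (S k)); [|lia].
    replace (Cminus (RtoC 0) (RtoC 0)) with (RtoC 0) by (apply injective_projections; simpl; ring).
    rewrite Cmod_0. ring. }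
  destruct (fs_series _ n Hv) as [He Hs]. split; [split|]; auto.
  apply lim0_intro. intros eps Heps. exists n. intros m Hm. rewrite (H m Hm), Cmod_0. auto.
Qed.

Lemma hahn_bounded x : in_hahn x -> exists B, forall k, Cmod (x k) <= B.
Proof.
  intros [_ Hl]. destruct (@filterlim_bounded C_AbsRing C_NormedModule x) as [B HB].
  { exists (RtoC 0). exact Hl. }
  exists B. intros k. apply HB.
Qed.

Lemma shift_eq a x k : shift_op a fwd_diff x k = Cminus (x (S k)) (Cmult (Cminus (RtoC 1) a) (x k)).
Proof. unfold shift_op, fwd_diff. apply injective_projections; simpl; ring. Qed.

Lemma Cmod_sub_le a b : Cmod (Cminus a b) <= Cmod a + Cmod b.
Proof.
  unfold Cminus. eapply Rle_trans; [apply Cmod_triangle|]. rewrite Cmod_opp. lra.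
Qed.

Lemma inj_part alpha : 1 <= Cmod (Cminus (RtoC 1) alpha) ->
  forall x y, in_hahn x -> in_hahn y ->
  shift_op alpha fwd_diff x = shift_op alpha fwd_diff y -> x = y.
Proof.
  intros Hb x y Hx Hy E.
  set (b := Cminus (RtoC 1) alpha) in *.
  set (z := fun k => Cminus (x k) (y k)).
  assert (Hz : forall k, z (S k) = Cmult b (z k)).
  { intros k. assert (E1 := f_equal (fun f => f k) E). simpl in E1.
    rewrite !shift_eq in E1. fold b in E1. unfold z.
    transitivity (Cplus (Cminus (Cminus (x (S k)) (Cmult b (x k))) (Cminus (y (S k)) (Cmult b (y k)))) (Cmult b (Cminus (x k) (y k)))); [ring|].
    rewrite E1. ring. }
  assert (Hm : forall k, Cmod (z 0%nat) <= Cmod (z k)).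
  { induction k; [lra|]. rewrite Hz, Cmod_mult.
    pose proof (Cmod_ge_0 (z k)). nra. }
  assert (H0 : Cmod (z 0%nat) = 0).
  { destruct (Req_dec (Cmod (z 0%nat)) 0) as [h|h]; auto. exfalso.
    pose proof (Cmod_ge_0 (z 0%nat)).
    assert (hp : 0 < Cmod (z 0%nat) / 2) by lra.
    destruct (lim0_eps x (proj2 Hx) _ hp) as [N1 H1].
    destruct (lim0_eps y (proj2 Hy) _ hp) as [N2 H2].
    specialize (H1 (N1 + N2)%nat ltac:(lia)). specialize (H2 (N1 + N2)%nat ltac:(lia)).
    specialize (Hm (N1 + N2)%nat). unfold z at 2 in Hm.
    pose proof (Cmod_sub_le (x (N1 + N2)%nat) (y (N1 + N2)%nat)). lra. }
  assert (Hz0 : forall k, z k = RtoC 0).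
  { induction k.
    - apply Cmod_eq_0. exact H0.
    - rewrite Hz, IHk. ring. }
  apply functional_extensionality. intros k. specialize (Hz0 k). unfold z in Hz0.
  transitivity (Cplus (Cminus (x k) (y k)) (y k)); [ring|]. rewrite Hz0. ring.
Qed.

Lemma dy_eq (b : C) x k :
  let y := fun k => Cminus (x (S k)) (Cmult b (x k)) in
  Cminus (y k) (y (S k)) =
  Cminus (Cminus (x (S k)) (x (S (S k)))) (Cmult b (Cminus (x k) (x (S k)))).
Proof. simpl. ring. Qed.

Lemma bounded_part alpha : 1 < Cmod (Cminus (RtoC 1) alpha) ->
  exists M, forall x, in_hahn x -> hahn_norm x <= M * hahn_norm (shift_op alpha fwd_diff x).
Proof.
  intros Hb. set (b := Cminus (RtoC 1) alpha) in *.
  set (nb := Cmod b) in *.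
  exists (/ (nb - 1)). intros x Hx.
  set (y := shift_op alpha fwd_diff x).
  assert (Hy : forall k, y k = Cminus (x (S k)) (Cmult b (x k))) by (intros; apply shift_eq).
  destruct (hahn_bounded x Hx) as [Bx HBx].
  assert (HBy : forall k, Cmod (y k) <= Bx + nb * Bx).
  { intros k. rewrite Hy. eapply Rle_trans; [apply Cmod_sub_le|]. rewrite Cmod_mult.
    fold nb. pose proof (HBx (S k)). pose proof (HBx k). pose proof (Cmod_ge_0 b). nra. }
  destruct (sp_bound x Bx HBx) as [Hspx _].
  destruct (sp_bound y _ HBy) as [Hspy _].
  assert (Hs1 : forall k, Cmod (x k) <= (sp x + sp y) / nb).
  { intros k. apply Rmult_le_reg_l with nb; [lra|].
    replace (nb * ((sp x + sp y) / nb)) with (sp x + sp y) by (field; lra).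
    assert (E : x k = Cdiv (Cminus (x (S k)) (y k)) b).
    { rewrite Hy. field. intro h. unfold nb in Hb. rewrite h, Cmod_0 in Hb. lra. }
    rewrite E. unfold Cdiv. rewrite Cmod_mult. unfold nb.
    assert (Hb0 : b <> RtoC 0) by (intro h; unfold nb in Hb; rewrite h, Cmod_0 in Hb; lra).
    rewrite Cmod_inv; auto.
    replace (Cmod b * (Cmod (Cminus (x (S k)) (y k)) * / Cmod b)) with (Cmod (Cminus (x (S k)) (y k))) by (field; fold nb; lra).
    eapply Rle_trans; [apply Cmod_sub_le|]. specialize (Hspx (S k)). specialize (Hspy k). lra. }
  destruct (sp_bound x _ Hs1) as [_ Hsx].
  assert (Hsup : sp x * (nb - 1) <= sp y).
  { apply Rmult_le_compat_l with (r := nb) in Hsx; [|lra].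
    replace (nb * ((sp x + sp y) / nb)) with (sp x + sp y) in Hsx by (field; lra). nra. }
  destruct Hx as [Hvx Hlx].
  assert (Hpt : forall k, nb * hahn_var x k <= hahn_var x (S k) + hahn_var y k).
  { intros k. unfold hahn_var.
    assert (E : Cmult b (Cminus (x k) (x (S k))) =
      Cminus (Cminus (x (S k)) (x (S (S k)))) (Cminus (y k) (y (S k)))).
    { rewrite !Hy. ring. }
    assert (H1 : nb * Cmod (Cminus (x k) (x (S k))) <=
       Cmod (Cminus (x (S k)) (x (S (S k)))) + Cmod (Cminus (y k) (y (S k)))).
    { unfold nb. rewrite <- Cmod_mult, E. apply Cmod_sub_le. }
    rewrite S_INR. pose proof (pos_INR k).
    pose proof (Cmod_ge_0 (Cminus (x (S k)) (x (S (S k))))). nra. }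
  assert (Hvy_le : forall k, hahn_var y k <= hahn_var x (S k) + nb * hahn_var x k).
  { intros k. unfold hahn_var. rewrite !Hy.
    rewrite (dy_eq b x k). rewrite S_INR.
    pose proof (Cmod_sub_le (Cminus (x (S k)) (x (S (S k)))) (Cmult b (Cminus (x k) (x (S k))))).
    rewrite Cmod_mult in H. fold nb in H. pose proof (pos_INR k).
    pose proof (Cmod_ge_0 (Cminus (x (S k)) (x (S (S k))))). nra. }
  assert (HvxS : ex_series (fun k => hahn_var x (S k))) by exact (proj1 (ex_series_incr_1 (hahn_var x)) Hvx).
  assert (Hsum : ex_series (fun k => hahn_var x (S k) + nb * hahn_var x k)).
  { apply (@ex_series_plus R_AbsRing R_NormedModule); auto.
    apply (@ex_series_scal R_AbsRing R_NormedModule); auto. }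
  assert (Hvy : ex_series (hahn_var y)).
  { apply (@ex_series_le R_AbsRing R_CompleteNormedModule (hahn_var y) (fun k => hahn_var x (S k) + nb * hahn_var x k)); [|exact Hsum].
    intros k. change (Rabs (hahn_var y k) <= hahn_var x (S k) + nb * hahn_var x k).
    rewrite Rabs_pos_eq; [apply Hvy_le|apply hv_ge0]. }
  assert (HV : nb * Series (hahn_var x) <= Series (hahn_var x) + Series (hahn_var y)).
  { rewrite <- Series_scal_l.
    rewrite (Series_incr_1 (hahn_var x)); auto.
    replace (hahn_var x 0%nat) with 0 by (unfold hahn_var; simpl; ring).
    rewrite Rplus_0_l, <- Series_plus; auto.
    apply Series_le.
    - intros k. split; [pose proof (hv_ge0 x k); pose proof (Cmod_ge_0 b); nra|apply Hpt].
    - apply (@ex_series_plus R_AbsRing R_NormedModule); auto. }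
  rewrite !hahn_norm_eq.
  apply Rmult_le_reg_l with (nb - 1); [lra|].
  rewrite <- Rmult_assoc, Rinv_r, Rmult_1_l; [|lra]. fold y. nra.
Qed.

Fixpoint cp (b : C) (k : nat) : C :=
  match k with O => RtoC 1 | S k => Cmult b (cp b k) end.

Lemma Cmod_cp b k : Cmod (cp b k) = Cmod b ^ k.
Proof. induction k; simpl. apply Cmod_1. rewrite Cmod_mult, IHk. ring. Qed.

Lemma ex_series_npow q : 0 <= q < 1 -> ex_series (fun n => (INR n + 1) * q ^ n).
Proof.
  intros Hq.
  assert (Hg : is_series (fun n => q ^ n) (Series (fun n => q ^ n))).
  { apply Series_correct. apply ex_series_geom. rewrite Rabs_pos_eq; lra. }
  pose proof (is_series_mult_pos _ _ _ _ Hg Hg) as H.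
  eexists. eapply is_series_ext; [|apply H].
  - intros n.
    transitivity (sum_f_R0 (fun _ => q ^ n) n).
    + apply sum_eq. intros k Hk. rewrite <- pow_add. replace (k + (n - k))%nat with n by lia. reflexivity.
    + rewrite sum_cte, S_INR. apply Rmult_comm.
  - intros; apply pow_le; lra.
  - intros; apply pow_le; lra.
Qed.

Lemma zero_hahn : in_hahn (fun _ => RtoC 0).
Proof. apply (proj1 (fs_hahn _ 0 (fun k _ => eq_refl))). Qed.

Lemma noninj_part alpha : Cmod (Cminus (RtoC 1) alpha) < 1 ->
  ~ (forall x y, in_hahn x -> in_hahn y ->
     shift_op alpha fwd_diff x = shift_op alpha fwd_diff y -> x = y).
Proof.
  intros Hb Hinj. set (b := Cminus (RtoC 1) alpha) in *.
  set (x := cp b).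
  assert (Hx : in_hahn x).
  { set (r := (Cmod b + 1) / 2).
    assert (Hr : 0 <= r < 1) by (pose proof (Cmod_ge_0 b); unfold r; lra).
    split.
    - apply (@ex_series_le R_AbsRing R_CompleteNormedModule _ (fun n => Cmod (Cminus (RtoC 1) b) * ((INR n + 1) * r ^ n))).
      + intros n. change (Rabs (hahn_var x n) <= Cmod (Cminus (RtoC 1) b) * ((INR n + 1) * r ^ n)).
        rewrite Rabs_pos_eq by apply hv_ge0. unfold hahn_var, x.
        replace (Cminus (cp b n) (cp b (S n))) with (Cmult (cp b n) (Cminus (RtoC 1) b)) by (simpl; ring).
        rewrite Cmod_mult, Cmod_cp.
        assert (Cmod b ^ n <= r ^ n) by (apply pow_incr; pose proof (Cmod_ge_0 b); unfold r; lra).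
        pose proof (pos_INR n). pose proof (Cmod_ge_0 (Cminus (RtoC 1) b)).
        pose proof (pow_le (Cmod b) n (Cmod_ge_0 b)).
        assert (INR n * Cmod b ^ n <= (INR n + 1) * r ^ n) by nra.
        rewrite <- Rmult_assoc, Rmult_comm. apply Rmult_le_compat_l; auto.
      + apply (@ex_series_scal R_AbsRing R_NormedModule). apply ex_series_npow; auto.
    - apply lim0_intro. intros eps Heps.
      pose proof (is_lim_seq_geom (Cmod b) ltac:(rewrite Rabs_pos_eq; [exact Hb|apply Cmod_ge_0])) as Hl.
      apply is_lim_seq_spec in Hl. destruct (Hl (mkposreal _ Heps)) as [N HN].
      exists N. intros n Hn. specialize (HN n Hn). simpl in HN.
      unfold x. rewrite Cmod_cp. rewrite Rminus_0_r, Rabs_pos_eq in HN; auto.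
      apply pow_le, Cmod_ge_0. }
  assert (E : x = fun _ => RtoC 0).
  { apply Hinj; auto. apply zero_hahn.
    apply functional_extensionality. intros k. rewrite !shift_eq. fold b.
    unfold x. simpl. ring. }
  assert (E0 := f_equal (fun f => fst (f 0%nat)) E). simpl in E0. lra.
Qed.

Section Dense.
Variable y : seqC.
Hypothesis Hy : in_hahn y.
Let a := hahn_var y.
Definition tau (m : nat) := Series (fun j => a (m + j)%nat).

Lemma ex_tail m : ex_series (fun j => a (m + j)%nat).
Proof. apply (ex_series_incr_n a m). exact (proj1 Hy). Qed.

Lemma tau_ge0 m : 0 <= tau m.
Proof. apply Series_ge0. apply ex_tail. intros; apply hv_ge0. Qed.

Lemma tau_S m : tau m = a m + tau (S m).
Proof.
  unfold tau. rewrite Series_incr_1 by apply ex_tail.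
  rewrite Nat.add_0_r. f_equal. apply Series_ext. intros j. f_equal. lia.
Qed.

Lemma tau_mono m d : tau (m + d) <= tau m.
Proof.
  induction d. rewrite Nat.add_0_r; lra.
  rewrite Nat.add_succ_r. pose proof (tau_S (m + d)). pose proof (hv_ge0 y (m + d)).
  unfold a in *. lra.
Qed.

Lemma weighted_y m : INR m * Cmod (y m) <= tau m.
Proof.
  assert (H : forall d, INR m * Cmod (y m) <= sum_f_R0 (fun j => a (m + j)%nat) d + INR m * Cmod (y (m + S d)%nat)).
  { assert (Hs : forall j, INR m * Cmod (y (m + j)%nat) <= a (m + j)%nat + INR m * Cmod (y (m + S j)%nat)).
    { intros j. unfold a, hahn_var.
      assert (E : y (m + j)%nat = Cplus (Cminus (y (m + j)%nat) (y (S (m + j)))) (y (m + S j)%nat)).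
      { rewrite Nat.add_succ_r. ring. }
      rewrite E at 1. pose proof (Cmod_triangle (Cminus (y (m + j)%nat) (y (S (m + j)))) (y (m + S j)%nat)).
      assert (INR m <= INR (m + j)) by (apply le_INR; lia).
      pose proof (pos_INR m). pose proof (Cmod_ge_0 (Cminus (y (m + j)%nat) (y (S (m + j))))).
      nra. }
    induction d.
    - simpl. specialize (Hs 0%nat). rewrite Nat.add_0_r in *. exact Hs.
    - simpl. specialize (Hs (S d)). lra. }
  destruct (Rle_lt_dec (INR m * Cmod (y m)) (tau m)) as [h|h]; auto. exfalso.
  set (e := INR m * Cmod (y m) - tau m).
  assert (He : 0 < e / (INR m + 1)) by (apply Rdiv_lt_0_compat; [unfold e; lra| pose proof (pos_INR m); lra]).
  destruct (lim0_eps y (proj2 Hy) _ He) as [N HN].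
  specialize (HN (m + S N)%nat ltac:(lia)). specialize (H N).
  pose proof (partial_le_Series _ N (ex_tail m) (fun k => hv_ge0 y _)). fold (tau m) in H0.
  assert (INR m * Cmod (y (m + S N)%nat) < e).
  { apply Rle_lt_trans with ((INR m + 1) * Cmod (y (m + S N)%nat)).
    pose proof (Cmod_ge_0 (y (m + S N)%nat)). nra.
    apply Rmult_lt_reg_l with (/ (INR m + 1)). pose proof (pos_INR m). apply Rinv_0_lt_compat; lra.
    rewrite <- Rmult_assoc, Rinv_l. rewrite Rmult_1_l. unfold Rdiv in HN. rewrite Rmult_comm. exact HN.
    pose proof (pos_INR m). lra. }
  unfold e in H1. lra.
Qed.

Fixpoint bk (b : C) (n m : nat) : C :=
  match m with
  | O => Cdiv (Copp (y n)) b
  | S m' => Cdiv (Cminus (bk b n m') (y (n - S m')%nat)) b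
  end.

Definition pre (b : C) (n : nat) : seqC := fun k => if (k <=? n)%nat then bk b n (n - k) else RtoC 0.

Lemma pre_fs b n : fsupp (pre b n) (S n).
Proof. intros k Hk. unfold pre. destruct (Nat.leb_spec k n); auto. lia. Qed.

Lemma pre_shift b n k : b <> RtoC 0 ->
  Cminus (pre b n (S k)) (Cmult b (pre b n k)) = if (k <=? n)%nat then y k else RtoC 0.
Proof.
  intros Hb. unfold pre.
  destruct (Nat.leb_spec k n) as [h|h].
  - destruct (Nat.leb_spec (S k) n) as [h2|h2].
    + replace (n - k)%nat with (S (n - S k)) by lia. simpl.
      replace (n - S (n - S k))%nat with k by lia. field. auto.
    + assert (k = n) by lia. subst. rewrite Nat.sub_diag. simpl. field. auto.
  - destruct (Nat.leb_spec (S k) n); [lia|]. ring.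
Qed.

Lemma dense_part b : Cmod b = 1 -> forall eps, 0 < eps ->
  exists x, in_hahn x /\
    hahn_norm (fun k => Cminus (Cminus (x (S k)) (Cmult b (x k))) (y k)) < eps.
Proof.
  intros Hb eps Heps.
  assert (Hb0 : b <> RtoC 0) by (intro h; rewrite h, Cmod_0 in Hb; lra).
  assert (Hser := Series_correct _ (proj1 Hy)). apply is_series_Reals in Hser.
  destruct (Hser (eps / 3) ltac:(lra)) as [N HN].
  set (n := S N).
  assert (Htau : tau (S n) < eps / 3).
  { specialize (HN n ltac:(unfold n; lia)). unfold R_dist in HN.
    pose proof (Series_incr_n a (S n) ltac:(lia) (proj1 Hy)). simpl pred in H.
    unfold tau. fold a in HN. apply Rabs_def2 in HN. lra. }
  exists (pre b n). split; [exact (proj1 (fs_hahn _ _ (pre_fs b n)))|].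
  set (g := fun k => Cminus (Cminus (pre b n (S k)) (Cmult b (pre b n k))) (y k)).
  assert (Hg : forall k, g k = if (k <=? n)%nat then RtoC 0 else Copp (y k)).
  { intros k. unfold g. rewrite pre_shift; auto. destruct (k <=? n)%nat; ring. }
  assert (Hv1 : forall k, (k < n)%nat -> hahn_var g k = 0).
  { intros k Hk. unfold hahn_var. rewrite !Hg.
    destruct (Nat.leb_spec k n); [|lia]. destruct (Nat.leb_spec (S k) n); [|lia].
    replace (Cminus (RtoC 0) (RtoC 0)) with (RtoC 0) by ring. rewrite Cmod_0. ring. }
  assert (Hv2 : hahn_var g n = INR n * Cmod (y (S n))).
  { unfold hahn_var. rewrite !Hg. destruct (Nat.leb_spec n n); [|lia].
    destruct (Nat.leb_spec (S n) n); [lia|].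
    replace (Cminus (RtoC 0) (Copp (y (S n)))) with (y (S n)) by ring. auto. }
  assert (Hv3 : forall j, hahn_var g (S n + j)%nat = a (S n + j)%nat).
  { intros j. unfold a, hahn_var. rewrite !Hg.
    destruct (Nat.leb_spec (S n + j) n); [lia|]. destruct (Nat.leb_spec (S (S n + j)) n); [lia|].
    f_equal. replace (Cminus (Copp (y (S n + j)%nat)) (Copp (y (S (S n + j)))))
      with (Copp (Cminus (y (S n + j)%nat) (y (S (S n + j))))) by ring.
    apply Cmod_opp. }
  assert (Hexg : ex_series (hahn_var g)).
  { apply (ex_series_incr_n _ (S n)). eapply ex_series_ext; [|apply (ex_tail (S n))].
    intros j; simpl; symmetry; apply Hv3. }
  assert (HSg : Series (hahn_var g) = INR n * Cmod (y (S n)) + tau (S n)).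
  { rewrite (Series_incr_n _ n) by (unfold n; lia || auto).
    rewrite (sum_eq _ (fun _ => 0)).
    2:{ intros i Hi. apply Hv1. unfold n in *. simpl in Hi. lia. }
    rewrite sum_cte, Rmult_0_l, Rplus_0_l.
    rewrite Series_incr_1.
    2:{ exact (proj1 (ex_series_incr_n _ n) Hexg). }
    rewrite Nat.add_0_r, Hv2. f_equal. unfold tau. apply Series_ext. intros j.
    replace (n + S j)%nat with (S n + j)%nat by lia. apply Hv3. }
  assert (Hgs : forall k, Cmod (g k) <= tau (S n)).
  { intros k. rewrite Hg. destruct (Nat.leb_spec k n).
    - rewrite Cmod_0. apply tau_ge0.
    - rewrite Cmod_opp. pose proof (weighted_y k).
      assert (1 <= INR k) by (apply (le_INR 1); lia).
      pose proof (tau_mono (S n) (k - S n)). replace (S n + (k - S n))%nat with k in H2 by lia.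
      pose proof (Cmod_ge_0 (y k)). nra. }
  destruct (sp_bound g _ Hgs) as [_ Hsp].
  rewrite hahn_norm_eq. fold g. rewrite HSg.
  pose proof (weighted_y (S n)). rewrite S_INR in H.
  pose proof (Cmod_ge_0 (y (S n))). lra.
Qed.
End Dense.

Lemma sum_INR m : sum_f_R0 INR m = INR m * (INR m + 1) / 2.
Proof. induction m. simpl. field. rewrite tech5, IHm, S_INR. field. Qed.

Lemma unb_generic (T : seqC -> seqC) c : 0 < c ->
  (forall m, exists x, in_hahn x /\ (forall k, (k <= m)%nat -> c * INR k <= hahn_var x k) /\
     (forall k, Cmod (T x k) <= 1) /\
     (forall k, (k < m)%nat \/ (S (S m) <= k)%nat -> hahn_var (T x) k = 0)) ->
  ~ (exists M : R, forall x, in_hahn x -> hahn_norm x <= M * hahn_norm (T x)).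
Proof.
  intros Hc Hfam [M HM].
  destruct (INR_unbounded (8 * Rabs M / c + 1)) as [m Hm].
  destruct (Hfam m) as [x [Hx [Hlow [Hy1 Hy0]]]].
  specialize (HM x Hx). set (y := T x) in *.
  assert (HL : c * (INR m * (INR m + 1) / 2) <= hahn_norm x).
  { rewrite hahn_norm_eq. destruct (hahn_bounded x Hx) as [B HB].
    pose proof (sp_ge0 x B HB).
    pose proof (partial_le_Series (hahn_var x) m (proj1 Hx) (hv_ge0 x)).
    assert (sum_f_R0 (fun k => c * INR k) m <= sum_f_R0 (hahn_var x) m).
    { apply sum_Rle. intros; apply Hlow; auto. }
    assert (E : forall j, sum_f_R0 (fun k => c * INR k) j = c * sum_f_R0 INR j).
    { induction j; simpl; [ring|]. rewrite IHj. ring. }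
    rewrite E, sum_INR in H1. lra. }
  assert (Hvy0 : forall k, (k < m)%nat \/ (S (S m) <= k)%nat -> hahn_var y k = 0).
  { exact Hy0. }
  assert (Hvyb : forall k, hahn_var y k <= 2 * INR k).
  { intros k. unfold hahn_var. pose proof (Cmod_sub_le (y k) (y (S k))).
    pose proof (Hy1 k). pose proof (Hy1 (S k)). pose proof (pos_INR k). nra. }
  assert (HU : hahn_norm y <= 4 * INR m + 3).
  { rewrite hahn_norm_eq.
    destruct (sp_bound y 1 Hy1) as [_ Hs].
    rewrite (Series_incr_n_aux _ m) by (intros; apply Hvy0; auto).
    destruct (fs_series (fun j => hahn_var y (m + j)%nat) 2) as [_ E].
    { intros k Hk. apply Hvy0. right. lia. }
    rewrite E. simpl. rewrite (Hvy0 (m + 2)%nat) by (right; lia).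
    pose proof (Hvyb (m + 0)%nat). pose proof (Hvyb (m + 1)%nat).
    rewrite Nat.add_0_r in H. rewrite plus_INR in H0. simpl in H0. rewrite Nat.add_0_r. lra. }
  assert (Hny : 0 <= hahn_norm y).
  { rewrite hahn_norm_eq. destruct (fs_series (hahn_var y) (S (S m))) as [Hex _].
    { intros k Hk. apply Hvy0. right. lia. }
    pose proof (Series_ge0 _ Hex (hv_ge0 y)). pose proof (sp_ge0 y 1 Hy1). lra. }
  assert (HMy : M * hahn_norm y <= Rabs M * (4 * INR m + 3)).
  { apply Rle_trans with (Rabs M * hahn_norm y).
    apply Rmult_le_compat_r; auto. apply Rle_abs.
    apply Rmult_le_compat_l; auto. apply Rabs_pos. }
  assert (Hcm : 8 * Rabs M < c * INR m).
  { assert (8 * Rabs M / c < INR m) by lra.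
    apply Rmult_lt_compat_l with (r := c) in H; auto.
    replace (c * (8 * Rabs M / c)) with (8 * Rabs M) in H by (field; lra). lra. }
  pose proof (pos_INR m). pose proof (Rabs_pos M).
  nra.
Qed.

Lemma hv_zero_of (y : seqC) k : y k = RtoC 0 -> y (S k) = RtoC 0 -> hahn_var y k = 0.
Proof. intros h1 h2. unfold hahn_var. rewrite h1, h2.
  replace (Cminus (RtoC 0) (RtoC 0)) with (RtoC 0) by ring. rewrite Cmod_0. ring. Qed.

Lemma hv_const (y : seqC) k v : y k = v -> y (S k) = v -> hahn_var y k = 0.
Proof. intros h1 h2. unfold hahn_var. rewrite h1, h2.
  replace (Cminus v v) with (RtoC 0) by ring. rewrite Cmod_0. ring. Qed.

Lemma family_neq1 alpha : Cmod (Cminus (RtoC 1) alpha) = 1 -> Cminus (RtoC 1) alpha <> RtoC 1 ->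
  forall m, exists x, in_hahn x /\
     (forall k, (k <= m)%nat -> Cmod (Cminus (RtoC 1) (Cminus (RtoC 1) alpha)) * INR k <= hahn_var x k) /\
     (forall k, Cmod (shift_op alpha fwd_diff x k) <= 1) /\
     (forall k, (k < m)%nat \/ (S (S m) <= k)%nat -> hahn_var (shift_op alpha fwd_diff x) k = 0).
Proof.
  intros Hb Hb1 m. set (b := Cminus (RtoC 1) alpha) in *.
  set (x := fun k => if (k <=? S m)%nat then cp b k else RtoC 0).
  exists x.
  assert (Hy : forall k, shift_op alpha fwd_diff x k =
             if (k =? S m)%nat then Copp (cp b (S (S m))) else RtoC 0).
  { intros k. rewrite shift_eq. fold b. unfold x.
    destruct (Nat.eqb_spec k (S m)) as [h|h].
    - subst. destruct (Nat.leb_spec (S (S m)) (S m)); [lia|].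
      destruct (Nat.leb_spec (S m) (S m)); [|lia]. simpl. ring.
    - destruct (Nat.leb_spec (S k) (S m)).
      + destruct (Nat.leb_spec k (S m)); [|lia]. simpl. ring.
      + destruct (Nat.leb_spec k (S m)); [lia|]. ring. }
  split; [|split; [|split]].
  - assert (Hfs : fsupp x (S (S m))).
    { intros k Hk. unfold x. destruct (Nat.leb_spec k (S m)); [lia|auto]. }
    exact (proj1 (fs_hahn x (S (S m)) Hfs)).
  - intros k Hk. unfold hahn_var, x.
    destruct (Nat.leb_spec k (S m)); [|lia]. destruct (Nat.leb_spec (S k) (S m)); [|lia].
    replace (Cminus (cp b k) (cp b (S k))) with (Cmult (cp b k) (Cminus (RtoC 1) b)) by (simpl; ring).
    rewrite Cmod_mult, Cmod_cp, Hb, pow1. right; ring.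
  - intros k. rewrite Hy. destruct (k =? S m)%nat.
    + rewrite Cmod_opp, Cmod_cp, Hb, pow1. lra.
    + rewrite Cmod_0. lra.
  - intros k Hk. apply hv_zero_of; rewrite Hy.
    + destruct (Nat.eqb_spec k (S m)); [lia|auto].
    + destruct (Nat.eqb_spec (S k) (S m)); [lia|auto].
Qed.

Lemma family_eq1 alpha : Cminus (RtoC 1) alpha = RtoC 1 ->
  forall m, exists x, in_hahn x /\
     (forall k, (k <= m)%nat -> 1 * INR k <= hahn_var x k) /\
     (forall k, Cmod (shift_op alpha fwd_diff x k) <= 1) /\
     (forall k, (k < m)%nat \/ (S (S m) <= k)%nat -> hahn_var (shift_op alpha fwd_diff x) k = 0).
Proof.
  intros Hb m.
  set (x := fun k => if (k <=? S m)%nat then RtoC (INR (S m - k)) else RtoC 0).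
  exists x.
  assert (Hy : forall k, shift_op alpha fwd_diff x k =
             if (k <=? m)%nat then RtoC (-1) else RtoC 0).
  { intros k. rewrite shift_eq, Hb. unfold x.
    destruct (Nat.leb_spec k m) as [h|h].
    - destruct (Nat.leb_spec (S k) (S m)); [|lia]. destruct (Nat.leb_spec k (S m)); [|lia].
      replace (S m - k)%nat with (S (S m - S k)) by lia. rewrite S_INR.
      apply injective_projections; simpl; ring.
    - destruct (Nat.leb_spec (S k) (S m)); [lia|].
      destruct (Nat.leb_spec k (S m)).
      + assert (k = S m) by lia. subst. rewrite Nat.sub_diag. simpl.
        apply injective_projections; simpl; ring.
      + ring. }
  split; [|split; [|split]].
  - assert (Hfs : fsupp x (S (S m))).
    { intros k Hk. unfold x. destruct (Nat.leb_spec k (S m)); [lia|auto]. }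
    exact (proj1 (fs_hahn x (S (S m)) Hfs)).
  - intros k Hk. unfold hahn_var, x.
    destruct (Nat.leb_spec k (S m)); [|lia]. destruct (Nat.leb_spec (S k) (S m)); [|lia].
    replace (S m - k)%nat with (S (S m - S k)) by lia. rewrite S_INR.
    replace (Cminus (RtoC (INR (S m - S k) + 1)) (RtoC (INR (S m - S k)))) with (RtoC 1)
      by (apply injective_projections; simpl; ring).
    rewrite Cmod_1. lra.
  - intros k. rewrite Hy. destruct (k <=? m)%nat.
    + rewrite Cmod_R. unfold Rabs; destruct Rcase_abs; lra.
    + rewrite Cmod_0. lra.
  - intros k [Hk|Hk].
    + apply (hv_const _ _ (RtoC (-1))); rewrite Hy.
      * destruct (Nat.leb_spec k m); [auto|lia].
      * destruct (Nat.leb_spec (S k) m); [auto|lia].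
    + apply hv_zero_of; rewrite Hy.
      * destruct (Nat.leb_spec k m); [lia|auto].
      * destruct (Nat.leb_spec (S k) m); [lia|auto].
Qed.

Theorem theorem4p6 (alpha : C) :
  cont_spectrum in_hahn hahn_norm fwd_diff alpha <->
  Cmod (Cminus (RtoC 1) alpha) = 1%R.
Proof.
  split.
  - intros [Hinj [_ Hunb]].
    destruct (Rtotal_order (Cmod (Cminus (RtoC 1) alpha)) 1) as [h|[h|h]]; auto.
    + exfalso. exact (noninj_part alpha h Hinj).
    + exfalso. apply Hunb. exact (bounded_part alpha h).
  - intros Hb. split; [|split].
    + apply inj_part. lra.
    + intros y Hy eps Heps.
      destruct (dense_part y Hy (Cminus (RtoC 1) alpha) Hb eps Heps) as [x [Hx Hn]].
      exists x. split; auto.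
      replace (fun k => Cminus (shift_op alpha fwd_diff x k) (y k)) with
        (fun k => Cminus (Cminus (x (S k)) (Cmult (Cminus (RtoC 1) alpha) (x k))) (y k)); auto.
      apply functional_extensionality. intros k. rewrite shift_eq. reflexivity.
    + destruct (Classical_Prop.classic (Cminus (RtoC 1) alpha = RtoC 1)) as [h|h].
      * apply (unb_generic _ 1); [lra|]. exact (family_eq1 alpha h).
      * apply (unb_generic _ (Cmod (Cminus (RtoC 1) (Cminus (RtoC 1) alpha)))).
        { destruct (Cmod_ge_0 (Cminus (RtoC 1) (Cminus (RtoC 1) alpha))) as [h2|h2]; auto.
          exfalso. apply h. symmetry in h2. apply Cmod_eq_0 in h2.
          transitivity (Cminus (RtoC 1) (Cminus (RtoC 1) (Cminus (RtoC 1) alpha))); [ring|].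
          rewrite h2. ring. }
        exact (family_neq1 alpha Hb h).
Qed.
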